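(* Let $X,Y$ be metric spaces, $X\times Y$ with the maximum metric, $E\subseteq X\times Y$, and let $A\subseteq X$ be a set such that $E_x=\{y\in Y:(x,y)\in E\}\ne\emptyset$ for all $x\in A$. Then (i) $\dim_{\mathrm P}E\ge\dim_{\mathrm P}A+\inf_{x\in A}\vec{\dim}_{\mathrm P}E_x$; (ii) $\underline{\dim}_{\mathrm P}E\ge\underline{\dim}_{\mathrm P}A+\inf_{x\in A}\underline{\dim}_{\mathrm P}E_x$; (iii) $\vec{\dim}_{\mathrm P}E\ge\vec{\dim}_{\mathrm P}A+\inf_{x\in A}\vec{\dim}_{\mathrm P}E_x$.
   Context: For a subset $E$ of a metric space, $N_\delta(E)$ is the minimal cardinality of a cover of $E$ by sets of diameter at most $\delta$. $\underline{\dim}_{\mathrm B}E=\liminf_{\delta\to0}\frac{\log N_\delta(E)}{|\log\delta|}$, $\overline{\dim}_{\mathrm B}E=\limsup_{\delta\to0}\frac{\log N_\delta(E)}{|\log\delta|}$. $\dim_{\mathrm P}E=\inf\{\sup_n\overline{\dim}_{\mathrm B}E_n:E\subseteq\bigcup_nE_n\}$, $\underline{\dim}_{\mathrm P}E=\inf\{\sup_n\underline{\dim}_{\mathrm B}E_n:E\subseteq\bigcup_nE_n\}$ (countable covers), and $\vec{\dim}_{\mathrm P}E=\inf\{\sup_n\underline{\dim}_{\mathrm B}E_n:E_n\uparrow E\}$, where $E_n\uparrow E$ means $(E_n)$ is an increasing sequence of sets with union $E$. *)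

(* Defs.v *)
From HB Require Import structures.
From mathcomp Require Import all_boot all_order all_algebra.
From mathcomp Require Import all_classical all_reals all_analysis.
Set Implicit Arguments. Unset Strict Implicit. Unset Printing Implicit Defensive.
Import Order.TTheory GRing.Theory Num.Theory.
Local Open Scope classical_set_scope.
Local Open Scope ring_scope.

Record metric (R : realType) (T : Type) := Metric {
  mdist :> T -> T -> R;
  mdist_eq0 : forall x y, mdist x y = 0 <-> x = y;
  mdist_sym : forall x y, mdist x y = mdist y x;
  mdist_tri : forall x y z, mdist x z <= mdist x y + mdist y z }.

Section Defs.
Variable R : realType.

Definition prod_dist (X Y : Type) (dX : metric R X) (dY : metric R Y)
  (p q : X * Y) : R := Num.max (dX p.1 q.1) (dY p.2 q.2).

Lemma prod_dist_eq0 X Y (dX : metric R X) (dY : metric R Y) p q :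
  prod_dist dX dY p q = 0 <-> p = q.
Proof.
have h0 : forall T (d : metric R T) x y, 0 <= d x y.
  move=> T d x y; have := mdist_tri d x y x; rewrite (mdist_sym d y x).
  rewrite ((mdist_eq0 d x x).2 erefl) -mulr2n => h.
  by rewrite -(pmulrn_lge0 _ (isT : (0 < 2)%N)) h.
case: p q => [x1 y1] [x2 y2]; rewrite /prod_dist /=; split; last first.
  by case=> -> ->; rewrite !(mdist_eq0 _ _ _).2 // maxxx.
move=> /eqP; rewrite eq_le ge_max => /andP[/andP[a b] _].
have ha : dX x1 x2 = 0 by apply/eqP; rewrite eq_le a h0.
have hb : dY y1 y2 = 0 by apply/eqP; rewrite eq_le b h0.
by rewrite ((mdist_eq0 _ _ _).1 ha) ((mdist_eq0 _ _ _).1 hb).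
Qed.

Lemma prod_dist_sym X Y (dX : metric R X) (dY : metric R Y) p q :
  prod_dist dX dY p q = prod_dist dX dY q p.
Proof. by rewrite /prod_dist mdist_sym [dY _ _]mdist_sym. Qed.

Lemma prod_dist_tri X Y (dX : metric R X) (dY : metric R Y) p q r :
  prod_dist dX dY p r <= prod_dist dX dY p q + prod_dist dX dY q r.
Proof.
rewrite /prod_dist ge_max; apply/andP; split.
- apply: le_trans (mdist_tri dX p.1 q.1 r.1) _.
  by apply: lerD; rewrite le_max lexx.
- apply: le_trans (mdist_tri dY p.2 q.2 r.2) _.
  by apply: lerD; rewrite le_max lexx ?orbT.
Qed.

Definition prod_metric X Y (dX : metric R X) (dY : metric R Y) : metric R (X * Y) :=
  Metric (@prod_dist_eq0 X Y dX dY) (@prod_dist_sym X Y dX dY)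
         (@prod_dist_tri X Y dX dY).

Local Open Scope ereal_scope.

(* diameter of a set (sup of distances; -oo for the empty set) *)
Definition diam T (d : metric R T) (F : set T) : \bar R :=
  ereal_sup [set (d p.1 p.2)%:E | p in F `*` F].

(* N_delta(E): minimal cardinality of a cover of E by sets of diameter at most
   delta; +oo if there is no finite such cover *)
Definition Ncov T (d : metric R T) (delta : R) (E : set T) : \bar R :=
  ereal_inf [set (n%:R)%:E | n in [set n : nat | exists F : nat -> set T,
     (forall i, (i < n)%N -> diam d (F i) <= delta%:E) /\
     E `<=` \bigcup_(i in [set i : nat | (i < n)%N]) F i]].

Definition elog (x : \bar R) : \bar R :=
  match x with
  | r%:E => if r == 0%R then -oo else (ln r)%:E
  | +oo => +oo
  | -oo => -oo
  end.

Definition box_ratio T (d : metric R T) (E : set T) (delta : R) : \bar R :=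
  elog (Ncov d delta E) * ((`|ln delta|)^-1)%:E.

Definition lowbox T (d : metric R T) (E : set T) : \bar R :=
  ereal_sup [set ereal_inf [set box_ratio d E delta | delta in
                              [set delta : R | (0 < delta < eps)%R]]
            | eps in [set eps : R | (0 < eps)%R]].

Definition upbox T (d : metric R T) (E : set T) : \bar R :=
  ereal_inf [set ereal_sup [set box_ratio d E delta | delta in
                              [set delta : R | (0 < delta < eps)%R]]
            | eps in [set eps : R | (0 < eps)%R]].

Definition dimP T (d : metric R T) (E : set T) : \bar R :=
  ereal_inf [set ereal_sup (range (fun n => upbox d (F n)))
            | F in [set F : nat -> set T | E `<=` \bigcup_n F n]].

Definition ldimP T (d : metric R T) (E : set T) : \bar R :=
  ereal_inf [set ereal_sup (range (fun n => lowbox d (F n)))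
            | F in [set F : nat -> set T | E `<=` \bigcup_n F n]].

Definition vdimP T (d : metric R T) (E : set T) : \bar R :=
  ereal_inf [set ereal_sup (range (fun n => lowbox d (F n)))
            | F in [set F : nat -> set T |
                     (forall n, F n `<=` F n.+1) /\ \bigcup_n F n = E]].

Definition section X Y (E : set (X * Y)) (x : X) : set Y := [set y | E (x, y)].

End Defs.

(* Main.v *)
Require Import Defs.
From mathcomp Require Import all_boot all_order all_algebra.
From mathcomp Require Import all_classical all_reals all_analysis.
From mathcomp Require Import lra ring.
Import Order.TTheory GRing.Theory Num.Theory.
Local Open Scope classical_set_scope.
Local Open Scope ereal_scope.
Set Implicit Arguments. Unset Strict Implicit.

Section Basics.
Variables (R : realType) (T : Type) (d : metric R T).

Lemma mdist_ge0 x y : (0 <= d x y)%R.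
Proof.
have := mdist_tri d x y x; rewrite (mdist_sym d y x).
rewrite ((mdist_eq0 d x x).2 erefl) -mulr2n => h.
by rewrite -(pmulrn_lge0 _ (isT : (0 < 2)%N)) h.
Qed.

Lemma diam_le (F : set T) (r : R) :
  (forall a b, F a -> F b -> d a b <= r)%R -> diam d F <= r%:E.
Proof. by move=> h; apply/ereal_supP => _ [[a b] [/= Fa Fb] <-]; rewrite lee_fin h. Qed.

Lemma diam_ub (F : set T) (r : R) a b :
  diam d F <= r%:E -> F a -> F b -> (d a b <= r)%R.
Proof.
move=> h Fa Fb; rewrite -lee_fin; apply: le_trans h.
by apply: ereal_sup_ubound; exists (a, b).
Qed.

Lemma Ncov_le (delta : R) (S : set T) n (F : nat -> set T) :
  (forall i, (i < n)%N -> diam d (F i) <= delta%:E) ->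
  S `<=` \bigcup_(i in [set i : nat | (i < n)%N]) F i ->
  Ncov d delta S <= n%:R%:E.
Proof. by move=> h1 h2; apply: ereal_inf_lbound; exists n => //; exists F. Qed.

Lemma Ncov_ge0 delta S : 0 <= Ncov d delta S.
Proof. by apply/ereal_infP => _ [n _ <-]; rewrite lee_fin ler0n. Qed.

Lemma Ncov_mono delta (S S' : set T) : S `<=` S' -> Ncov d delta S <= Ncov d delta S'.
Proof.
move=> sub; apply/ereal_infP => _ [n [F [h1 h2]] <-].
apply: (Ncov_le h1); exact: subset_trans h2.
Qed.

Lemma Ncov_attain delta S : Ncov d delta S = +oo \/
  exists n, exists F : nat -> set T,
    [/\ (forall i, (i < n)%N -> diam d (F i) <= delta%:E),
        S `<=` \bigcup_(i in [set i : nat | (i < n)%N]) F i &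
        Ncov d delta S = n%:R%:E].
Proof.
set P := fun n => exists F : nat -> set T,
     (forall i, (i < n)%N -> diam d (F i) <= delta%:E) /\
     S `<=` \bigcup_(i in [set i : nat | (i < n)%N]) F i.
have [ex|nex] := pselect (exists n, P n); last first.
  left; apply/eqP; rewrite eq_le leey /=.
  by apply/ereal_infP => y [n Pn _]; exfalso; apply: nex; exists n.
right.
pose Pb' := fun n => `[< P n >].
have exb : exists n, Pb' n by case: ex => n Pn; exists n; apply/asboolP.
case: (ex_minnP exb) => n0 /asboolP Pn0 minP.
case: (Pn0) => F [h1 h2]; exists n0, F; split => //.
apply/eqP; rewrite eq_le; apply/andP; split; first exact: Ncov_le h1 h2.
apply/ereal_infP => _ [n Pn <-]; rewrite lee_fin ler_nat; apply: minP.
exact/asboolP.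
Qed.

Lemma Ncov_seq delta (S : set T) (s : seq nat) (V : nat -> set T) :
  (forall i, i \in s -> diam d (V i) <= delta%:E) ->
  (forall x, S x -> exists2 i, i \in s & V i x) ->
  Ncov d delta S <= (size s)%:R%:E.
Proof.
move=> h1 h2; apply: (@Ncov_le _ _ _ (fun k => V (nth 0%N s k))).
  by move=> i hi; apply: h1; rewrite mem_nth.
move=> x /h2 [i iis Vix]; exists (index i s); first by rewrite /= index_mem.
by rewrite nth_index.
Qed.

End Basics.
Section Ratio.
Variables (R : realType) (T : Type) (d : metric R T).

Lemma ratio_le (S : set T) (delta r : R) : (0 < delta < 1)%R ->
  (r%:E <= box_ratio d S delta) = ((expR (r * - ln delta))%:E <= Ncov d delta S).
Proof.
move=> dl; have L0 : (0 < - ln delta)%R by rewrite oppr_gt0 ln_lt0.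
rewrite /box_ratio ltr0_norm -?oppr_gt0 // lee_pdivlMr // -EFinM.
have := Ncov_ge0 d delta S.
case: (Ncov d delta S) => [x| |] //= x0; last by rewrite !leey.
rewrite lee_fin in x0; have [->|xn0] := eqVneq x 0%R.
  by rewrite leNgt ltNye /= lee_fin leNgt expR_gt0.
rewrite !lee_fin.
have xp : (0 < x)%R by rewrite lt_def xn0 x0.
by rewrite -{2}(lnK xp) ler_expR.
Qed.

Lemma ratio_lt (S : set T) (delta r : R) : (0 < delta < 1)%R ->
  (box_ratio d S delta < r%:E) = (Ncov d delta S < (expR (r * - ln delta))%:E).
Proof. by move=> dl; rewrite !ltNge ratio_le. Qed.

End Ratio.
Section Fiber.
Variables (R : realType) (X Y : Type) (dX : metric R X) (dY : metric R Y).
Let P := prod_metric dX dY.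

Lemma prod_le1 (p q : X * Y) : (dX p.1 q.1 <= P p q)%R.
Proof. by rewrite /= /prod_dist le_max lexx. Qed.
Lemma prod_le2 (p q : X * Y) : (dY p.2 q.2 <= P p q)%R.
Proof. by rewrite /= /prod_dist le_max lexx orbT. Qed.

Variables (G : set (X * Y)) (B : set X) (delta m : R).
Hypothesis d0 : (0 < delta)%R.
Hypothesis m0 : (0 < m)%R.
Hypothesis hB : forall x, B x -> m%:E <= Ncov dY delta (section G x).

Definition fclaim (s : seq nat) := forall (U : nat -> set (X * Y)),
  (forall i, i \in s -> diam P (U i) <= delta%:E) ->
  forall B' : set X, B' `<=` B ->
  (forall p, G p -> B' p.1 -> exists2 i, i \in s & U i p) ->
  Ncov dX (2 * delta) B' * m%:E <= (size s)%:R%:E.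

Lemma fclaim_step s : (forall s', (size s' < size s)%N -> fclaim s') -> fclaim s.
Proof.
move=> IH U hU B' sB hcov.
have [[x0 Bx0]|B'0] := pselect (B' !=set0); last first.
  have -> : Ncov dX (2 * delta) B' = 0.
    apply/eqP; rewrite eq_le Ncov_ge0 andbT.
    apply: (@Ncov_le _ _ _ _ _ 0%N (fun _ => set0)) => // x Bx.
    by exfalso; apply: B'0; exists x.
  by rewrite mul0e lee_fin ler0n.
pose P1 := fun i => `[< exists y, U i (x0, y) >].
pose s1 := seq.filter P1 s; pose s2 := seq.filter (predC P1) s.
have hs : size s = (size s1 + size s2)%N.
  by rewrite !size_filter count_predC.
have ms1 : (m <= (size s1)%:R)%R.
  rewrite -lee_fin; apply: le_trans (hB (sB _ Bx0)) _.
  apply: (@Ncov_seq _ _ _ _ _ _ (fun i => [set y | U i (x0, y)])).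
    move=> i; rewrite mem_filter => /andP[_ ins]; apply: diam_le => a b Ua Ub.
    apply: le_trans (prod_le2 (x0, a) (x0, b)) _.
    exact: (diam_ub (hU _ ins)).
  move=> y Gy; have [i ins Ui] := hcov (x0, y) Gy Bx0.
  exists i => //; rewrite mem_filter ins andbT; apply/asboolP; by exists y.
have s1pos : (0 < size s1)%N.
  by rewrite -(ltr_nat R); apply: lt_le_trans ms1.
pose B'' := [set x | B' x /\ (delta < dX x0 x)%R].
have IH2 := IH s2 _ U _ B'' _ _.
have : Ncov dX (2 * delta) B'' * m%:E <= (size s2)%:R%:E.
  apply: IH2.
  - by rewrite hs -{1}(add0n (size s2)) ltn_add2r.
  - by move=> i; rewrite mem_filter => /andP[_]; apply: hU.
  - by move=> x [/sB].
  move=> p Gp [B'p dp]; have [i ins Ui] := hcov p Gp B'p.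
  exists i => //; rewrite mem_filter ins andbT /=.
  apply/negP => /asboolP [y Uy].
  have := diam_ub (hU _ ins) Uy Ui.
  move=> h; have := le_trans (prod_le1 (x0, y) p) h.
  by rewrite /= leNgt dp.
case: (Ncov_attain dX (2 * delta) B'') => [->|[n [F [hF cF ->]]]].
  by rewrite gt0_mulye ?lte_fin.
rewrite -EFinM lee_fin => hn.
pose F' := fun i => if i == n then [set x | dX x0 x <= delta]%R else F i.
have : Ncov dX (2 * delta) B' <= n.+1%:R%:E.
  apply: (@Ncov_le _ _ _ _ _ _ F').
    move=> i; rewrite /F'; case: eqVneq => [_ _|ne lt].
      apply: diam_le => a b ha hb; apply: le_trans (mdist_tri dX a x0 b) _.
      rewrite mdist_sym; apply: le_trans (lerD ha hb) _.
      lra.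
    by apply: hF; rewrite ltn_neqAle ne /= -ltnS.
  move=> x B'x; have [xn|xf] := leP (dX x0 x) delta.
    by exists n; [rewrite /= ltnSn | rewrite /F' eqxx].
  have [i ilt Fi] := cF x (conj B'x xf).
  by exists i; [rewrite /= ltnW | rewrite /F' (ltn_eqF ilt)].
move=> hle; apply: le_trans (lee_wpmul2r _ hle) _; first by rewrite lee_fin ltW.
rewrite -EFinM lee_fin hs natrD -nat1r mulrDl mul1r addrC.
by rewrite addrC; apply: lerD.
Qed.

Lemma fclaim_all n s : (size s <= n)%N -> fclaim s.
Proof.
elim: n s => [|n IHn] s hs; apply: fclaim_step => s' hs'.
  by move: hs; rewrite leqn0 => /eqP h; rewrite h in hs'.
by apply: IHn; rewrite -ltnS (leq_trans hs').
Qed.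

Lemma fiber_bound : Ncov dX (2 * delta) B * m%:E <= Ncov P delta G.
Proof.
apply/ereal_infP => y [n [F [hF cF]] <-].
have := @fclaim_all n (iota 0 n) _ F _ B (@subset_refl _ B) _.
rewrite size_iota; apply => //.
- by move=> i; rewrite mem_iota add0n => /hF.
move=> p Gp Bp; have [i ilt Fi] := cF p Gp.
by exists i => //; rewrite mem_iota add0n.

Qed.
End Fiber.
Lemma ereal_between (R : realType) (x : R) (e : \bar R) :
  x%:E < e -> exists y : R, (x < y)%R /\ y%:E < e.
Proof.
case: e => [r| |] //=.
  rewrite lte_fin => h; exists ((x + r) / 2)%R; rewrite lte_fin; split; lra.
by move=> _; exists (x + 1)%R; split; [lra | rewrite ltry].
Qed.

Section Box.
Variables (R : realType) (T : Type) (d : metric R T).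

Lemma lowbox_gt (S : set T) (t : R) : t%:E < lowbox d S ->
  exists2 eps : R, (0 < eps)%R &
    forall delta, (0 < delta < eps)%R -> t%:E < box_ratio d S delta.
Proof.
move/ereal_sup_gt => [_ [eps /= eps0 <-] ht]; exists eps => // delta hd.
apply: lt_le_trans ht _; apply: ereal_inf_lbound; by exists delta.
Qed.

Lemma lowbox_ge (S : set T) (r eps : R) : (0 < eps)%R ->
  (forall delta, (0 < delta < eps)%R -> r%:E <= box_ratio d S delta) ->
  r%:E <= lowbox d S.
Proof.
move=> e0 h; apply: le_trans (ereal_sup_ubound _) ; last by exists eps.
by apply/ereal_infP => _ [delta hd <-]; apply: h.
Qed.

Lemma upbox_gt (S : set T) (t : R) : t%:E < upbox d S ->
  forall eps, (0 < eps)%R -> exists delta, (0 < delta < eps)%R /\ t%:E < box_ratio d S delta.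
Proof.
move=> ht eps e0.
have : t%:E < ereal_sup [set box_ratio d S delta | delta in
                              [set delta : R | (0 < delta < eps)%R]].
  apply: lt_le_trans ht _; apply: ereal_inf_lbound; by exists eps.
by move/ereal_sup_gt => [_ [delta hd <-] h]; exists delta.
Qed.

Lemma upbox_ge (S : set T) (r : R) :
  (forall eps, (0 < eps)%R -> exists delta, (0 < delta < eps)%R /\ r%:E <= box_ratio d S delta) ->
  r%:E <= upbox d S.
Proof.
move=> h; apply/ereal_infP => _ [eps e0 <-].
have [delta [hd hr]] := h eps e0; apply: le_trans hr _.
by apply: ereal_sup_ubound; exists delta.
Qed.

Lemma upbox_le (S : set T) (r eps : R) : (0 < eps)%R ->
  (forall delta, (0 < delta < eps)%R -> box_ratio d S delta <= r%:E) ->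
  upbox d S <= r%:E.
Proof.
move=> e0 h; apply: le_trans (ereal_inf_lbound _) _; first by exists eps.
by apply/ereal_supP => _ [delta hd <-]; apply: h.
Qed.

Lemma upbox_lt (S : set T) (r : R) : upbox d S < r%:E ->
  exists2 eps : R, (0 < eps)%R &
    forall delta, (0 < delta < eps)%R -> box_ratio d S delta < r%:E.
Proof.
move/ereal_inf_lt => [_ [eps /= eps0 <-] ht]; exists eps => // delta hd.
apply: le_lt_trans ht; apply: ereal_sup_ubound; by exists delta.
Qed.

End Box.

Section Core.
Variables (R : realType) (X Y : Type) (dX : metric R X) (dY : metric R Y).
Let P := prod_metric dX dY.

Lemma small_delta (s s' : R) : (s < s')%R -> exists2 e : R, (0 < e)%R &
  forall delta, (0 < delta < e)%R ->
    (Num.max s' 0 * ln 2 <= (s' - s) * - ln delta)%R.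
Proof.
move=> ss; set c := (Num.max s' 0 * ln 2 / (s' - s))%R.
exists (expR (- c)); first exact: expR_gt0.
move=> delta /andP[d0 de].
have : (ln delta < - c)%R.
  by rewrite -[X in (_ < X)%R]expRK ltr_ln ?posrE ?expR_gt0.
move=> h; have hc : (c <= - ln delta)%R by lra.
have sp : (0 < s' - s)%R by lra.
by move: hc; rewrite /c ler_pdivrMr // [X in (_ <= X)%R -> _]mulrC.
Qed.

Variables (G : set (X * Y)) (B : set X) (t s s' eta : R).
Hypothesis eta0 : (0 < eta)%R.
Hypothesis hfib : forall x, B x -> forall delta, (0 < delta < eta)%R ->
  (expR (t * - ln delta))%:E <= Ncov dY delta (section G x).
Hypothesis ss' : (s < s')%R.

Lemma chain delta : (0 < delta)%R -> (delta < eta)%R -> (delta < 1/2)%R ->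
  (Num.max s' 0 * ln 2 <= (s' - s) * - ln delta)%R ->
  s'%:E <= box_ratio dX B (2 * delta) ->
  (s + t)%:E <= box_ratio P G delta.
Proof.
move=> d0 de dh hc hb.
rewrite ratio_le; last by rewrite d0 /=; lra.
rewrite ratio_le in hb; last by apply/andP; split; lra.
have hfb := @fiber_bound R X Y dX dY G B delta (expR (t * - ln delta)) (expR_gt0 _)
  (fun x Bx => hfib Bx (introT andP (conj d0 de))).
apply: le_trans hfb; apply: le_trans (lee_wpmul2r _ hb); last by rewrite lee_fin expR_ge0.
rewrite -EFinM lee_fin -expRD ler_expR lnM ?posrE //.
have l2 : (0 <= ln (2 : R))%R by apply: ln_ge0; lra.
have : (s' * ln 2 <= Num.max s' 0 * ln 2)%R by rewrite ler_wpM2r // le_max lexx.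
move: hc; set L := ln delta; set l := ln 2; nra.
Qed.
End Core.
Section Core2.
Variables (R : realType) (X Y : Type) (dX : metric R X) (dY : metric R Y).
Let P := prod_metric dX dY.

Lemma core_low (G : set (X * Y)) (B : set X) (t s eta : R) : (0 < eta)%R ->
  (forall x, B x -> forall delta, (0 < delta < eta)%R ->
    (expR (t * - ln delta))%:E <= Ncov dY delta (section G x)) ->
  s%:E < lowbox dX B -> (s + t)%:E <= lowbox P G.
Proof.
move=> eta0 hfib hs.
have [s' [ss' hs']] := ereal_between hs.
have [eps1 e1 h1] := lowbox_gt hs'.
have [e2 e2p h2] := small_delta ss'.
apply: (@lowbox_ge _ _ _ _ _ (Num.min (Num.min eta (1/2)) (Num.min (eps1/2) e2))%R).
  by rewrite !lt_min eta0 e2p /=; apply/andP; split; lra.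
move=> delta /andP[d0]; rewrite !lt_min => /andP[/andP[de dh] /andP[d1 d2]].
apply: (@chain _ _ _ _ _ _ _ _ _ s' _ hfib) => //.
  by apply: h2; rewrite d0.
by apply: ltW; apply: h1; apply/andP; split; lra.
Qed.

Lemma core_up (G : set (X * Y)) (B : set X) (t s eta : R) : (0 < eta)%R ->
  (forall x, B x -> forall delta, (0 < delta < eta)%R ->
    (expR (t * - ln delta))%:E <= Ncov dY delta (section G x)) ->
  s%:E < upbox dX B -> (s + t)%:E <= upbox P G.
Proof.
move=> eta0 hfib hs.
have [s' [ss' hs']] := ereal_between hs.
have h1 := upbox_gt hs'.
have [e2 e2p h2] := small_delta ss'.
apply: upbox_ge => eps e0.
set e := (Num.min (Num.min eta (1/2)) (Num.min eps e2))%R.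
have ep : (0 < e)%R by rewrite !lt_min eta0 e2p e0 /=; lra.
have [d' [/andP[d'0 d'e] hb]] := h1 (2 * e)%R ltac:(lra).
exists (d' / 2)%R; move: d'e; rewrite -ltr_pdivrMl // => d'e.
have := d'e; rewrite /e !lt_min => /andP[/andP[de dh] /andP[d1 d2]].
split; first by apply/andP; split; lra.
apply: (@chain _ _ _ _ _ _ _ _ _ s' _ hfib) => //.
- by lra.
- by lra.
- by lra.
- by apply: h2; apply/andP; split; lra.
by apply: ltW; have -> : (2 * (d' / 2) = d')%R by field.
Qed.
End Core2.
Section Util.
Variable R : realType.

Lemma pinfty_le (c : \bar R) : (forall M : R, M%:E <= c) -> c = +oo.
Proof.
case: c => [r| |] // h.
  by have := h (r + 1)%R; rewrite lee_fin => ?; exfalso; lra.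
by have := h 0%R.
Qed.

Lemma fin_le (x : R) (c : \bar R) :
  (forall e : R, (0 < e)%R -> (x - e)%:E <= c) -> x%:E <= c.
Proof.
case: c => [r| |] h //.
- rewrite lee_fin leNgt; apply/negP => hr.
  by have := h ((x - r) / 2)%R ltac:(lra); rewrite lee_fin; lra.
- by rewrite leey.
- by have := h 1%R ltr01.
Qed.

Lemma approx (a b c : \bar R) :
  (forall s t : R, s%:E < a -> t%:E < b -> (s + t)%:E <= c) -> a + b <= c.
Proof.
case: a => [r1| |] h; case: b h => [r2| |] h //=.
- apply: fin_le => e e0.
  have := h (r1 - e / 2)%R (r2 - e / 2)%R.
  rewrite !lte_fin; have -> : (r1 - e / 2 + (r2 - e / 2) = r1 + r2 - e)%R by field.
  by apply; lra.
- rewrite (pinfty_le (c := c)) ?leey // => M.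
  have := h (r1 - 1)%R (M - r1 + 1)%R; rewrite lte_fin ltry.
  have -> : (r1 - 1 + (M - r1 + 1) = M)%R by field.
  by apply => //; lra.
- by rewrite leNye.
- rewrite (pinfty_le (c := c)) ?leey // => M.
  have := h (M - r2 + 1)%R (r2 - 1)%R; rewrite lte_fin ltry.
  have -> : (M - r2 + 1 + (r2 - 1) = M)%R by field.
  by apply => //; lra.
- rewrite (pinfty_le (c := c)) ?leey // => M.
  have := h (M - 0)%R 0%R; rewrite !ltry addr0 subr0; by apply.
- by rewrite leNye.
- by rewrite leNye.
- by rewrite leNye.
- by rewrite leNye.
Qed.

Lemma le_via_reals (x c : \bar R) : (forall r : R, c < r%:E -> x <= r%:E) -> x <= c.
Proof.
case: c => [r| |] h.
- case: x h => [y| |] h; rewrite ?leNye //.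
  + apply: (@fin_le y) => e e0; rewrite lee_fin leNgt; apply/negP => hr.
    by have := h ((y - e + r) / 2)%R; rewrite !lte_fin lee_fin => /(_ ltac:(lra)); lra.
  + by have := h (r + 1)%R; rewrite lte_fin => /(_ ltac:(lra)).
- by rewrite leey.
- case: x h => [y| |] h; rewrite ?leNye //.
  + by have := h (y - 1)%R (ltNyr _); rewrite lee_fin => ?; exfalso; lra.
  + by have := h 0%R (ltNyr _).
Qed.

Lemma arch_small (eps : R) (n : nat) : (0 < eps)%R ->
  exists k : nat, (n <= k)%N /\ ((k.+1%:R)^-1 < eps)%R.
Proof.
move=> e0; exists (maxn n (Num.trunc (eps^-1))); split; first exact: leq_maxl.
rewrite invf_plt ?posrE ?ltr0Sn //.
apply: lt_le_trans (truncnS_gt _) _; rewrite ler_nat ltnS leq_maxr //.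
Qed.

Lemma big_L (c : R) : exists2 e : R, (0 < e)%R &
  forall delta, (0 < delta < e)%R -> (c <= - ln delta)%R.
Proof.
exists (expR (- c)); first exact: expR_gt0.
move=> delta /andP[d0 de].
have : (ln delta < - c)%R by rewrite -[X in (_ < X)%R]expRK ltr_ln ?posrE ?expR_gt0.
lra.
Qed.
End Util.
Lemma ereal_between2 (R : realType) (c : \bar R) (r : R) :
  c < r%:E -> exists r0 : R, c < r0%:E /\ (r0 < r)%R.
Proof.
case: c => [x| |] //=.
  rewrite lte_fin => h; exists ((x + r) / 2)%R; rewrite lte_fin; split; lra.
by move=> _; exists (r - 1)%R; split; [rewrite ltNyr | lra].
Qed.

Section Union.
Variables (R : realType) (T : Type) (d : metric R T).

Lemma Ncov_U delta (S1 S2 : set T) n1 n2 (F1 F2 : nat -> set T) :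
  (forall i, (i < n1)%N -> diam d (F1 i) <= delta%:E) ->
  S1 `<=` \bigcup_(i in [set i : nat | (i < n1)%N]) F1 i ->
  (forall i, (i < n2)%N -> diam d (F2 i) <= delta%:E) ->
  S2 `<=` \bigcup_(i in [set i : nat | (i < n2)%N]) F2 i ->
  Ncov d delta (S1 `|` S2) <= (n1 + n2)%N%:R%:E.
Proof.
move=> h1 c1 h2 c2.
apply: (@Ncov_le _ _ _ _ _ _ (fun i => if (i < n1)%N then F1 i else F2 (i - n1)%N)).
  move=> i hi; case: ifP => hi1; first exact: h1.
  by apply: h2; rewrite ltn_subLR // leqNgt hi1.
move=> x [/c1 [i /= hi Fi]|/c2 [i /= hi Fi]].
  by exists i; [rewrite /= ltn_addr | rewrite hi].
exists (n1 + i)%N; first by rewrite /= ltn_add2l.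
by rewrite ltnNge leq_addr /= addKn.
Qed.

Lemma upbox_U (S1 S2 : set T) (c : \bar R) :
  upbox d S1 <= c -> upbox d S2 <= c -> upbox d (S1 `|` S2) <= c.
Proof.
move=> u1 u2; apply: le_via_reals => r hr.
have [r0 [cr0 r0r]] := ereal_between2 hr.
have [e1 e10 h1] := upbox_lt (le_lt_trans u1 cr0).
have [e2 e20 h2] := upbox_lt (le_lt_trans u2 cr0).
have [e3 e30 h3] := big_L (ln (2 : R) / (r - r0)).
apply: (@upbox_le _ _ _ _ _ (Num.min (Num.min e1 e2) (Num.min e3 1))%R).
  by rewrite !lt_min e10 e20 e30 ltr01.
move=> delta /andP[d0]; rewrite !lt_min => /andP[/andP[de1 de2] /andP[de3 d1]].
have dd : (0 < delta < 1)%R by rewrite d0 d1.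
apply: ltW; rewrite ratio_lt //.
have := h1 delta; rewrite d0 de1 => /(_ isT); rewrite ratio_lt //.
have := h2 delta; rewrite d0 de2 => /(_ isT); rewrite ratio_lt //.
case: (Ncov_attain d delta S1) => [->|[n1 [F1 [hF1 cF1 ->]]]]; first by move=> _; rewrite ltNge leey.
case: (Ncov_attain d delta S2) => [->|[n2 [F2 [hF2 cF2 ->]]]]; first by rewrite ltNge leey.
rewrite !lte_fin => lt2 lt1.
apply: le_lt_trans (Ncov_U hF1 cF1 hF2 cF2) _; rewrite lte_fin natrD.
have hL := h3 delta (introT andP (conj d0 de3)).
have rr : (0 < r - r0)%R by lra.
have : (ln 2 <= (r - r0) * - ln delta)%R by rewrite mulrC -ler_pdivrMr.
move=> hl; have : (expR (ln 2) <= expR ((r - r0) * - ln delta))%R by rewrite ler_expR.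
rewrite lnK ?posrE // => h2e.
have -> : (r * - ln delta = (r - r0) * - ln delta + r0 * - ln delta)%R by ring.
rewrite expRD.
have E0 := expR_gt0 (r0 * - ln delta).
nra.
Qed.
End Union.
Section Main.
Variables (R : realType) (X Y : Type) (dX : metric R X) (dY : metric R Y).
Let P := prod_metric dX dY.
Variables (E : set (X * Y)) (A : set X).

Lemma sect_fact (S : set Y) (t t' : R) : (t < t')%R -> t'%:E < lowbox dY S ->
  exists2 eps : R, (0 < eps)%R & forall delta, (0 < delta < eps)%R ->
    (expR (t * - ln delta))%:E <= Ncov dY delta S.
Proof.
move=> tt' /lowbox_gt [eps e0 h]; exists (Num.min eps 1)%R; first by rewrite lt_min e0 ltr01.
move=> delta /andP[d0]; rewrite lt_min => /andP[de d1].
rewrite -ratio_le ?d0 //; apply: ltW; apply: le_lt_trans (h delta _); last by rewrite d0.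
by rewrite lee_fin ltW.
Qed.

Definition Bset (t : R) (G : set (X * Y)) (k : nat) : set X :=
  [set x | A x /\ forall delta, (0 < delta < (k.+1%:R)^-1)%R ->
    (expR (t * - ln delta))%:E <= Ncov dY delta (section G x)].

Lemma section_mono (G G' : set (X * Y)) x : G `<=` G' -> section G x `<=` section G' x.
Proof. by move=> h y; apply: h. Qed.

Lemma Bset_incl t G G' k k' : G `<=` G' -> (k <= k')%N -> Bset t G k `<=` Bset t G' k'.
Proof.
move=> GG kk x [Ax h]; split => // delta /andP[d0 dk].
apply: le_trans _ (Ncov_mono _ _ (section_mono GG)); apply: h; rewrite d0 /=.
apply: lt_le_trans dk _; rewrite lef_pV2 ?posrE ?ltr0Sn // ler_nat ltnS //.
Qed.

Lemma Bset_get t t' (G : nat -> set (X * Y)) x n :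
  (forall n k, (n <= k)%N -> G n `<=` G k) -> A x -> (t < t')%R ->
  t'%:E < lowbox dY (section (G n) x) -> exists k, Bset t (G k) k x.
Proof.
move=> Ginc Ax tt' hn.
have [eps e0 he] := sect_fact tt' hn.
have [k [nk ke]] := arch_small n e0.
exists k; split => // delta /andP[d0 dk].
apply: le_trans (he delta _) (Ncov_mono _ _ (section_mono (Ginc _ _ nk))).
by rewrite d0 (lt_trans dk ke).
Qed.

Lemma Bset_eta k : (0 < (k.+1%:R : R)^-1)%R.
Proof. by rewrite invr_gt0 ltr0Sn. Qed.

Lemma incr_le (F : nat -> set (X * Y)) : (forall n, F n `<=` F n.+1) ->
  forall n k, (n <= k)%N -> F n `<=` F k.
Proof.
move=> h n k; elim: k => [|k IH]; first by rewrite leqn0 => /eqP ->.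
rewrite leq_eqVlt => /orP[/eqP ->//|]; rewrite ltnS => /IH; move/subset_trans; apply; apply: h.
Qed.

Lemma part3 : vdimP dX A + ereal_inf [set vdimP dY (section E x) | x in A] <= vdimP P E.
Proof.
apply/ereal_infP => _ [F [Finc FE] <-].
apply: approx => s t hs ht.
have [t' [tt' ht']] := ereal_between ht.
pose B := fun k => Bset t (F k) k.
have Bcov : forall x, A x -> exists k, B k x.
  move=> x Ax.
  have hx : t'%:E < vdimP dY (section E x).
    by apply: lt_le_trans ht' _; apply: ereal_inf_lbound; exists x.
  have : vdimP dY (section E x) <= ereal_sup (range (fun n => lowbox dY (section (F n) x))).
    apply: ereal_inf_lbound; exists (fun n => section (F n) x) => //; split.
      by move=> n; apply: section_mono.
    by rewrite -FE; apply/seteqP; split => y /= [n _ h]; exists n.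
  move=> h; have := lt_le_trans hx h => /ereal_sup_gt [_ [n _ <-] hn].
  exact: (Bset_get (incr_le Finc) Ax tt' hn).
have hA' : vdimP dX A <= ereal_sup (range (fun k => lowbox dX (B k))).
  apply: ereal_inf_lbound; exists B => //; split.
    by move=> k; apply: Bset_incl => //; apply: Finc.
  apply/seteqP; split => x; first by move=> [k _ []].
  by move=> /Bcov [k Bk]; exists k.
have := lt_le_trans hs hA' => /ereal_sup_gt [_ [k _ <-] hk].
have h := @core_low R X Y dX dY (F k) (B k) t s _ (Bset_eta k) (fun x Bx => proj2 Bx) hk.
apply: le_trans h _.
by apply: ereal_sup_ubound; exists k.
Qed.

Lemma part2 : ldimP dX A + ereal_inf [set ldimP dY (section E x) | x in A] <= ldimP P E.
Proof.
apply/ereal_infP => _ [F FE <-].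
apply: approx => s t hs ht.
have [t' [tt' ht']] := ereal_between ht.
pose B := fun j => let p := odflt (0%N, 0%N) (unpickle j) in Bset t (F p.1) p.2.
have Bcov : forall x, A x -> exists j, B j x.
  move=> x Ax.
  have hx : t'%:E < ldimP dY (section E x).
    by apply: lt_le_trans ht' _; apply: ereal_inf_lbound; exists x.
  have : ldimP dY (section E x) <= ereal_sup (range (fun n => lowbox dY (section (F n) x))).
    apply: ereal_inf_lbound; exists (fun n => section (F n) x) => //.
    by move=> y /FE [n _ h]; exists n.
  move=> h; have := lt_le_trans hx h => /ereal_sup_gt [_ [n _ <-] hn].
  have [k hk] := @Bset_get t t' (fun _ => F n) x n (fun _ _ _ => @subset_refl _ _) Ax tt' hn.
  by exists (pickle (n, k)); rewrite /B pickleK.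
have hA' : ldimP dX A <= ereal_sup (range (fun k => lowbox dX (B k))).
  apply: ereal_inf_lbound; exists B => //.
  by move=> x /Bcov [k Bk]; exists k.
have := lt_le_trans hs hA' => /ereal_sup_gt [_ [j _ <-] hk].
set p := odflt (0%N, 0%N) (unpickle j) in hk.
have h := @core_low R X Y dX dY (F p.1) (B j) t s _ (Bset_eta p.2) (fun x Bx => proj2 Bx) hk.
apply: le_trans h _.
by apply: ereal_sup_ubound; exists p.1.
Qed.

Lemma part1 : dimP dX A + ereal_inf [set vdimP dY (section E x) | x in A] <= dimP P E.
Proof.
apply/ereal_infP => _ [F FE <-].
apply: approx => s t hs ht.
have [t' [tt' ht']] := ereal_between ht.
pose G := fun k => \bigcup_(i in [set i : nat | (i <= k)%N]) F i.
have Ginc : forall n k, (n <= k)%N -> G n `<=` G k.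
  by move=> n k nk p [i /= hi Fi]; exists i => //=; apply: leq_trans nk.
pose B := fun k => Bset t (G k) k.
have Bcov : forall x, A x -> exists k, B k x.
  move=> x Ax.
  have hx : t'%:E < vdimP dY (section E x).
    by apply: lt_le_trans ht' _; apply: ereal_inf_lbound; exists x.
  have : vdimP dY (section E x) <=
      ereal_sup (range (fun n => lowbox dY (section (G n `&` E) x))).
    apply: ereal_inf_lbound; exists (fun n => section (G n `&` E) x) => //; split.
      move=> n; apply: section_mono => p [Gp Ep]; split => //.
      exact: (Ginc n n.+1 (leqnSn n)).
    apply/seteqP; split => y /=; first by move=> [n _ []].
    move=> Ey; have [n _ Fn] := FE _ Ey; exists n => //; split => //.
    by exists n => /=.
  move=> h; have := lt_le_trans hx h => /ereal_sup_gt [_ [n _ <-] hn].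
  have Ginc' : forall n k, (n <= k)%N -> G n `&` E `<=` G k `&` E.
    by move=> a b ab p [Gp Ep]; split => //; exact: (Ginc a b ab).
  have [k hk] := @Bset_get t t' (fun m => G m `&` E) x n Ginc' Ax tt' hn.
  exists k; apply: (Bset_incl _ _ hk) => //; exact: subIsetl.
have hA' : dimP dX A <= ereal_sup (range (fun k => upbox dX (B k))).
  apply: ereal_inf_lbound; exists B => //.
  by move=> x /Bcov [k Bk]; exists k.
have := lt_le_trans hs hA' => /ereal_sup_gt [_ [k _ <-] hk].
have h := @core_up R X Y dX dY (G k) (B k) t s _ (Bset_eta k) (fun x Bx => proj2 Bx) hk.
apply: le_trans h _.
set c := ereal_sup _.
have Fc : forall n, upbox P (F n) <= c by move=> n; apply: ereal_sup_ubound; exists n.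
elim: k {hk B Bcov hA'} => [|k IH].
  have -> : G 0%N = F 0%N.
    apply/seteqP; split => p; first by move=> [i /=]; rewrite leqn0 => /eqP ->.
    by move=> Fp; exists 0%N.
  exact: Fc.
have -> : G k.+1 = G k `|` F k.+1.
  apply/seteqP; split => p.
    move=> [i /=]; rewrite leq_eqVlt => /orP[/eqP -> Fp|]; first by right.
    by rewrite ltnS => hi Fp; left; exists i.
  move=> [[i /= hi Fp]|Fp]; first by exists i => //=; apply: leq_trans hi _.
  by exists k.+1 => /=.
exact: upbox_U.
Qed.
End Main.

Unset Implicit Arguments. Set Strict Implicit.
Theorem theorem4p4 (R : realType) (X Y : Type) (dX : metric R X) (dY : metric R Y)
  (E : set (X * Y)) (A : set X)
  (hA : forall x, A x -> section E x !=set0) :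
  [/\ dimP (prod_metric dX dY) E >=
        dimP dX A + ereal_inf [set vdimP dY (section E x) | x in A],
      ldimP (prod_metric dX dY) E >=
        ldimP dX A + ereal_inf [set ldimP dY (section E x) | x in A] &
      vdimP (prod_metric dX dY) E >=
        vdimP dX A + ereal_inf [set vdimP dY (section E x) | x in A]].
Proof. by split; [apply: part1 | apply: part2 | apply: part3]. Qed.
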